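(* Let $\Gamma$ be a lattice satisfying the standing assumptions below, and let $M$ be an $X$-type operator of the 3D toric code on $\Gamma$ that is a stabilizer or a logical operator, and whose support $\mathrm{supp}(M)$ (set of faces on which it acts nontrivially) is not a cut set of $\Gamma$. Then each face in $\mathrm{supp}(M)$ lies in the boundary of exactly one volume; that is, $\mathrm{supp}(M)\subseteq\mathcal{F}=\{f\in C_2(\Gamma):|\iota(f)|=1\}$.
   Context: $\Gamma$ is a finite, connected three-dimensional cell complex with edges $C_1(\Gamma)$ (partial edges allowed at the boundary), faces $C_2(\Gamma)$, volumes $C_3(\Gamma)$; $\partial(f)$ denotes the boundary edges of a face, $\partial(\nu)$ the boundary faces of a volume, $\iota(e)$ the set of faces containing edge $e$, $\iota(f)$ the set of volumes having $f$ in their boundary; for a set $A$ of edges, $\iota(A)$ is the symmetric difference of the $\iota(e)$, $e\in A$. Every face lies in the boundary of at most two volumes. Standing assumptions: (L1) $\Gamma$ has no boundaries in its interior, so that every face cycle (a sequence of faces, each lying in exactly two volumes, such that for every volume $\nu$ the faces of $\partial(\nu)$ occur an even number of times in it) equals, as a set mod 2, $\iota(A)$ for some $A\subseteq C_1(\Gamma)$; (L2) the boundary of every face of $\Gamma$ and of its dual $\Gamma^*$ is a closed path or an open path beginning and ending with partial edges; the dual complex is connected. The 3D toric code on $\Gamma$ has one qubit per face and stabilizer group generated by $B_e=\prod_{f\in\iota(e)}Z_f$ and $A_\nu=\prod_{f\in\partial(\nu)}X_f$; a logical operator is a Pauli operator commuting with all stabilizers but not in the stabilizer group (up to phase). A face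 path is a sequence of faces $\rho=(f_1,\dots,f_m)$ with pairwise distinct volumes $\Lambda(\rho)=(\nu_1,\dots,\nu_{m-1})$ such that $f_i,f_{i+1}\in\partial(\nu_i)$. A set of faces $K$ is a cut set of $\Gamma$ if there exist volumes $\nu,\nu'$ such that every face path $\rho=(f_1,\dots,f_m)$ with $f_1\in\partial(\nu)$, $f_m\in\partial(\nu')$ and $\nu,\nu'\notin\Lambda(\rho)$ satisfies $K\cap\rho\neq\emptyset$. *)

(* Defs.v *)
From mathcomp Require Import all_boot.
Set Implicit Arguments. Unset Strict Implicit. Unset Printing Implicit Defensive.

Section Complex.
(* Vert: vertices (needed only to express (L2) and connectedness);
   Edge = C_1, Face = C_2, Vol = C_3. *)
Variables (Vert Edge Face Vol : finType).
Variable bde : Edge -> {set Vert}.   (* endpoints of an edge: 1 element = partial edge *)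
Variable bdf : Face -> {set Edge}.
Variable bdv : Vol -> {set Face}.

Definition iota_e (e : Edge) : {set Face} := [set f | e \in bdf f].
Definition iota_f (f : Face) : {set Vol} := [set v | f \in bdv v].

Definition symsum (I T : finType) (A : {set I}) (F : I -> {set T}) : {set T} :=
  [set t | odd #|[set i in A | t \in F i]|].

Definition iota_set (A : {set Edge}) : {set Face} := symsum A iota_e.

Definition Fbd : {set Face} := [set f | #|iota_f f| == 1].

Definition face_cycle (s : seq Face) : Prop :=
  all (fun f => #|iota_f f| == 2) s /\ forall v : Vol, ~~ odd (count [in bdv v] s).
Definition set_mod2 (s : seq Face) : {set Face} := [set f | odd (count_mem f s)].
Definition L1 : Prop :=
  forall s, face_cycle s -> exists A : {set Edge}, set_mod2 s = iota_set A.
End Complex.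

(* Paths in a graph whose edges have endpoint sets given by [ends];
   an edge e with #|ends e| = 1 is partial. *)
Section Paths.
Variables (V E : finType) (ends : E -> {set V}).
(* closed path e_1 .. e_k through vertices v_1 .. v_k, e_i joining v_i and v_{i+1 mod k} *)
Definition closed_path (P : {set E}) : Prop :=
  exists (es : seq E) (vs : seq V),
    [/\ 0 < size es, uniq es, P = [set e in es], size vs = size es &
        all (fun t => (ends t.1 == [set t.2.1; t.2.2]) && (t.2.1 != t.2.2))
            (zip es (zip vs (rot 1 vs)))].
(* open path e_1 .. e_k (k >= 2) through v_1 .. v_(k-1), where e_1 and e_k are
   partial edges with endpoints v_1 and v_(k-1), e_i joining v_(i-1) and v_i *)
Definition open_partial_path (P : {set E}) : Prop :=
  exists (e1 ek : E) (mid : seq E) (v : V) (ws : seq V),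
    let es := e1 :: rcons mid ek in
    [/\ uniq es, P = [set e in es], size ws = size mid,
        ends e1 = [set v] /\ ends ek = [set last v ws] &
        all (fun t => (ends t.1 == [set t.2.1; t.2.2]) && (t.2.1 != t.2.2))
            (zip mid (zip (v :: ws) ws))].
Definition path_bd (P : {set E}) : Prop := closed_path P \/ open_partial_path P.
End Paths.

Section Toric.
Variables (Vert Edge Face Vol : finType).
Variable bde : Edge -> {set Vert}.
Variable bdf : Face -> {set Edge}.
Variable bdv : Vol -> {set Face}.

Definition standing : Prop :=
  [/\
      (forall e, 0 < #|bde e| <= 2),
      (forall f, #|iota_f bdv f| <= 2),
      (* Gamma is connected (its 1-skeleton is connected) and the dual complex
         is connected *)
      (forall u w : Vert, connect [rel a b | [exists e, bde e == [set a; b]]] u w) /\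
      (forall v v' : Vol, connect [rel a b | [exists f, (f \in bdv a) && (f \in bdv b)]] v v'),
      L1 bdf bdv &
      (* (L2) for Gamma: boundary of each face; for Gamma^*: the dual face of an
         edge e has as boundary the dual edges f^* (f in iota(e)), whose endpoints
         are the volumes iota(f) *)
      (forall f, path_bd bde (bdf f)) /\ (forall e, path_bd (iota_f bdv) (iota_e bdf e))].

(* Pauli operators on the face qubits, up to phase: (X-part, Z-part). *)
Definition pauli := ({set Face} * {set Face})%type.
Definition commute (P Q : pauli) : bool :=
  ~~ odd (#|P.1 :&: Q.2| + #|P.2 :&: Q.1|).
(* stabilizer group generated by A_nu = (bd nu, 0) and B_e = (0, iota e), up to phase *)
Definition in_stab (P : pauli) : Prop :=
  exists (Vs : {set Vol}) (Es : {set Edge}),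
    P = (symsum Vs bdv, symsum Es (iota_e bdf)).
Definition logical (P : pauli) : Prop :=
  (forall Q, in_stab Q -> commute P Q) /\ ~ in_stab P.
Definition Xtype (P : pauli) : Prop := P.2 = set0.
Definition supp (P : pauli) : {set Face} := P.1 :|: P.2.

Definition face_path (fs : seq Face) (vs : seq Vol) : Prop :=
  exists (f : Face) (fs' : seq Face),
    [/\ fs = f :: fs', size vs = size fs', uniq vs &
        all (fun t => (t.2.1 \in bdv t.1) && (t.2.2 \in bdv t.1))
            (zip vs (zip (f :: fs') fs'))].
Definition cut_set (K : {set Face}) : Prop :=
  exists nu nu' : Vol,
    forall (f : Face) (fs : seq Face) (vs : seq Vol),
      face_path (f :: fs) vs -> f \in bdv nu -> last f fs \in bdv nu' ->
      nu \notin vs -> nu' \notin vs -> has [in K] (f :: fs).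
End Toric.

(* Main.v *)
Require Import Defs.
From mathcomp Require Import all_boot.
From Stdlib Require Import Classical.
Set Implicit Arguments. Unset Strict Implicit.

Section S.
Variables (Face Vol : finType) (bdv : Vol -> {set Face}).
Hypothesis hc : forall g, #|iota_f bdv g| <= 2.

Lemma face2 g a b : g \in bdv a -> g \in bdv b -> a != b -> iota_f bdv g = [set a; b].
Proof.
move=> ha hb hab; apply/eqP; rewrite eq_sym eqEcard cards2 hab (leq_trans (hc g)) // andbT.
by apply/subsetP => x; rewrite !inE => /orP [] /eqP ->.
Qed.

Lemma face2_mem g a b v : g \in bdv a -> g \in bdv b -> a != b ->
  nat_of_bool (g \in bdv v) = (a == v) + (b == v).
Proof.
move=> ha hb hab; have := face2 ha hb hab => /setP /(_ v); rewrite !inE => ->.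
case: (eqVneq a v) => [<-|]; last by rewrite [v == b]eq_sym.
by rewrite /= eq_sym (negbTE hab).
Qed.



Lemma face2_sym g a b Vs : g \in bdv a -> g \in bdv b -> a != b ->
  (g \in symsum Vs bdv) = (a \in Vs) (+) (b \in Vs).
Proof.
move=> ha hb hab; rewrite inE.
have -> : [set i in Vs | g \in bdv i] = Vs :&: [set a; b].
  by apply/setP => x; rewrite !inE; have /setP/(_ x) := face2 ha hb hab; rewrite !inE => ->.
case: (boolP (a \in Vs)) => hA; case: (boolP (b \in Vs)) => hB /=.
- have -> : Vs :&: [set a; b] = [set a; b].
    by apply/setP => x; rewrite !inE; (have [->|?] := eqVneq x a; [rewrite ?eqxx ?hA ?(negbTE hA) ?(negbTE hab) ?orbF ?orbT ?andbT ?andbF //| have [->|?] := eqVneq x b; rewrite ?eqxx ?hB ?(negbTE hB) ?andbF ?andbT ?orbF ?orbT //]); rewrite ?andbF ?orbF //.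
  by rewrite cards2 hab.
- have -> : Vs :&: [set a; b] = [set a].
    by apply/setP => x; rewrite !inE; (have [->|?] := eqVneq x a; [rewrite ?eqxx ?hA ?(negbTE hA) ?(negbTE hab) ?orbF ?orbT ?andbT ?andbF //| have [->|?] := eqVneq x b; rewrite ?eqxx ?hB ?(negbTE hB) ?andbF ?andbT ?orbF ?orbT //]); rewrite ?andbF ?orbF //.
  by rewrite cards1.
- have -> : Vs :&: [set a; b] = [set b].
    by apply/setP => x; rewrite !inE; (have [->|?] := eqVneq x a; [rewrite ?eqxx ?hA ?(negbTE hA) ?(negbTE hab) ?orbF ?orbT ?andbT ?andbF //| have [->|?] := eqVneq x b; rewrite ?eqxx ?hB ?(negbTE hB) ?andbF ?andbT ?orbF ?orbT //]); rewrite ?andbF ?orbF //.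
  by rewrite cards1.
- have -> : Vs :&: [set a; b] = set0.
    by apply/setP => x; rewrite !inE; (have [->|?] := eqVneq x a; [rewrite ?eqxx ?hA ?(negbTE hA) ?(negbTE hab) ?orbF ?orbT ?andbT ?andbF //| have [->|?] := eqVneq x b; rewrite ?eqxx ?hB ?(negbTE hB) ?andbF ?andbT ?orbF ?orbT //]); rewrite ?andbF ?orbF //.
  by rewrite cards0.
Qed.

Lemma pathL gs : forall g us a b, size us = size gs ->
  all (fun t => (t.2.1 \in bdv t.1) && (t.2.2 \in bdv t.1)) (zip us (zip (g::gs) gs)) ->
  g \in bdv a -> last g gs \in bdv b -> uniq (a :: rcons us b) ->
 [/\ all (fun g => #|iota_f bdv g| == 2) (g::gs),
   forall v, count [in bdv v] (g::gs) = count_mem v (a::us) + count_mem v (rcons us b)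
   & forall Vs, ~~ has [in symsum Vs bdv] (g::gs) -> (a \in Vs) = (b \in Vs)].
Proof.
elim: gs => [|g' gs IH] g [|u us] a b //=.
- move=> _ _ ha hb; rewrite andbT inE => hab.
  split.
  + by rewrite (face2 ha hb hab) cards2 hab.
  + by move=> v; rewrite /= (face2_mem v ha hb hab) !addn0.
  + by move=> Vs; rewrite orbF (face2_sym _ ha hb hab); case: (a \in Vs); case: (b \in Vs).
- move=> [hs] /andP [/andP [hgu hg'u] hall] ha hb.
  rewrite in_cons negb_or mem_rcons in_cons => /andP [/andP [hau _] huq].
  have [IH1 IH2 IH3] := IH g' us u b hs hall hg'u hb huq.
  split.
  + by move: IH1 => /= ->; rewrite (face2 ha hgu hau) cards2 hau.
  + move=> v; have := IH2 v; rewrite /= => ->; rewrite (face2_mem v ha hgu hau).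
    by rewrite -!addnA; congr (_ + _); rewrite addnCA.
  + move=> Vs; rewrite negb_or => /andP [h1 h2].
    rewrite -(IH3 Vs h2).
    move: h1; rewrite /= (face2_sym _ ha hgu hau).
    by case: (a \in Vs); case: (u \in Vs).
Qed.
End S.

Lemma path_ne (V E : finType) (ends : E -> {set V}) P :
  path_bd ends P -> (exists x, x \in P) /\ (forall x, x \in P -> ends x != set0).
Proof.
case.
- move=> [es [vs [hs _ -> hsz hall]]]; split.
    by case: es hs {hsz hall} => // e es _; exists e; rewrite inE mem_head.
  move=> x; rewrite inE => hx.
  have : x \in unzip1 (zip es (zip vs (rot 1 vs))).
    by rewrite unzip1_zip // size_zip size_rot hsz minnn.
  case/mapP => t ht ->; move/allP: hall => /(_ t ht) /andP [/eqP -> _].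
  by apply/set0Pn; exists t.2.1; rewrite !inE eqxx.
- move=> [e1 [ek [mid [v [ws [_ -> hsz [h1 hk] hall]]]]]]; split.
    by exists e1; rewrite inE mem_head.
  move=> x; rewrite inE in_cons mem_rcons in_cons => /orP [/eqP ->|/orP [/eqP ->|hx]].
  + by rewrite h1; apply/set0Pn; exists v; rewrite inE.
  + by rewrite hk; apply/set0Pn; exists (last v ws); rewrite inE.
  have : x \in unzip1 (zip mid (zip (v :: ws) ws)).
    by rewrite unzip1_zip // size_zip /= hsz; rewrite (minn_idPr (leqnSn _)).
  case/mapP => t ht ->; move/allP: hall => /(_ t ht) /andP [/eqP -> _].
  by apply/set0Pn; exists t.2.1; rewrite !inE eqxx.
Qed.

Theorem lemma5 (Vert Edge Face Vol : finType) (bde : Edge -> {set Vert})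
    (bdf : Face -> {set Edge}) (bdv : Vol -> {set Face}) (M : pauli Face) :
  standing bde bdf bdv ->
  Xtype M ->
  (in_stab bdf bdv M \/ logical bdf bdv M) ->
  ~ cut_set bdv (supp M) ->
  supp M \subset Fbd bdv.
Proof.
move=> [hE hc _ hL1 [hL2f hL2e]] hX hM hcut.
apply/subsetP => f hf.
have hf1 : f \in M.1 by move: hf; rewrite /supp hX setU0.
have hsupp : supp M = M.1 by rewrite /supp hX setU0.
rewrite inE.
have hpos : 0 < #|iota_f bdv f|.
  have [[e he] _] := path_ne (hL2f f).
  have [_ h] := path_ne (hL2e e).
  by rewrite card_gt0; apply: h; rewrite inE.
have := hc f; rewrite leq_eqVlt ltnS leq_eqVlt ltnS leqn0 (gtn_eqF hpos) orbF.
case/orP => [h2|//].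
exfalso.
case/cards2P: h2 => nu [nu' [hnn hio]].
have hfnu : f \in bdv nu by have /setP/(_ nu) := hio; rewrite !inE eqxx.
have hfnu' : f \in bdv nu' by have /setP/(_ nu') := hio; rewrite !inE eqxx orbT.
have [f0 [fs [vs [hp [h0 [hl [hv1 [hv2 hK]]]]]]]] :
  exists f0 fs vs, face_path bdv (f0::fs) vs /\ f0 \in bdv nu /\ last f0 fs \in bdv nu' /\
    nu \notin vs /\ nu' \notin vs /\ ~~ has [in supp M] (f0::fs).
  apply: NNPP => hn; apply: hcut; exists nu, nu' => f0 fs vs H1 H2 H3 H4 H5.
  case: (boolP (has _ _)) => // hh; exfalso; apply: hn.
  by exists f0, fs, vs.
case: hp => f' [fs' [[<- <-] hsz huq hall]].
have hu : uniq (nu :: rcons vs nu').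
  by rewrite /= mem_rcons in_cons negb_or hnn hv1 rcons_uniq hv2 huq.
have [P1 P2 P3] := pathL hc hsz hall h0 hl hu.
case: hM => [[Vs [Es hMe]]|[hcomm _]].
- move: (P3 Vs); rewrite -[symsum Vs bdv]/((symsum Vs bdv, symsum Es (iota_e bdf)).1) -hMe -hsupp.
  move=> /(_ hK).
  move: hf1; rewrite hMe /= (face2_sym hc _ hfnu hfnu' hnn).
  by case: (nu \in Vs); case: (nu' \in Vs).
- set s := f :: f0 :: fs.
  have hfc : face_cycle bdv s.
    split; first by move: P1; rewrite /s /= => ->; rewrite hio cards2 hnn.
    move=> v; rewrite /s /= (face2_mem hc v hfnu hfnu' hnn).
    have := P2 v; rewrite /= => ->.
    rewrite -cats1 count_cat /= addn0.
    rewrite !oddD; case: (nu == v); case: (nu' == v); by case: (odd (count_mem v vs)).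
  have [A hA] := hL1 s hfc.
  have := hcomm (symsum set0 bdv, symsum A (iota_e bdf)).
  rewrite /Defs.commute hX /=.
  have -> : (M.1 :&: (symsum set0 bdv, symsum A (iota_e bdf)).2) = [set f].
    rewrite /= -[symsum A _]/(iota_set bdf A) -hA.
    apply/setP => x; rewrite !inE.
    have hn y : y \in M.1 -> y \notin f0 :: fs.
      move=> hy; apply/negP => hin; move/hasPn: hK => /(_ y hin).
      by rewrite /= hsupp hy.
    case: (boolP (x \in M.1)) => hx /=; last first.
      by apply/esym/negP => /eqP ex; rewrite ex hf1 in hx.
    have := count_memPn (hn x hx); rewrite /= => ->.
    by rewrite addn0 eq_sym; case: (x == f).
  rewrite set0I cards0 addn0 cards1 /=.
  move=> H; suff: false by []; apply: H; by exists set0, A.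
Qed.
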